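(* Let $\mathcal E$ be an eventual identity on an $F$-manifold $(M,\circ,e)$. Then for all integers $m,n\in\mathbb Z$, $$[\mathcal E^n,\mathcal E^m]=(m-n)\,\mathcal E^{m+n-1}\circ[e,\mathcal E].$$
   Context: An $F$-manifold $(M,\circ,e)$ is a smooth manifold $M$ together with a commutative, associative, $C^\infty(M)$-bilinear multiplication $\circ$ on $TM$ with unit vector field $e$, such that $$L_{X\circ Y}(\circ)=X\circ L_Y(\circ)+Y\circ L_X(\circ)$$ for all vector fields $X,Y$. Here $$L_Z(\circ)(X,Y):=[Z,X\circ Y]-[Z,X]\circ Y-X\circ[Z,Y].$$ A vector field $\mathcal E$ is invertible if there is a vector field $\mathcal E^{-1}$ with $\mathcal E\circ\mathcal E^{-1}=e$ everywhere on $M$. An eventual identity on $(M,\circ,e)$ is an invertible vector field $\mathcal E$ such that the multiplication $X*Y:=X\circ Y\circ\mathcal E^{-1}$ defines an $F$-manifold structure on $M$ (its unit is $\mathcal E$). Powers are taken with respect to $\circ$: $\mathcal E^0=e$, $\mathcal E^{n}=\mathcal E\circ\cdots\circ\mathcal E$ ($n$ factors) for $n>0$, and $\mathcal E^{-n}=(\mathcal E^{-1})^n$. *)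

(* Defs.v *)
(* Smooth manifolds are not available; vector fields on M are
   modelled abstractly as a Lie-Rinehart algebra (V, [.,.], rho) over the
   commutative ring A (= C^oo(M)). *)
From HB Require Import structures.
From mathcomp Require Import all_boot all_order all_algebra.
Set Implicit Arguments. Unset Strict Implicit. Unset Printing Implicit Defensive.
Import GRing.Theory.
Local Open Scope ring_scope.

Section Defs.
Variables (A : comPzRingType) (V : lmodType A).

(* (V, br, rho) is a Lie-Rinehart algebra over A: the axioms satisfied by
   smooth vector fields on a manifold with functions A = C^oo(M), Lie bracket
   br and action rho X f = X(f). *)
Definition LieRinehart (br : V -> V -> V) (rho : V -> A -> A) : Prop :=
  (forall X Y Z, br (X + Y) Z = br X Z + br Y Z) /\
      (forall X Y, br X Y = - br Y X) /\
      (forall X Y Z, br X (br Y Z) + br Y (br Z X) + br Z (br X Y) = 0) /\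
      (forall X f g, rho X (f + g) = rho X f + rho X g) /\
      (forall X f g, rho X (f * g) = rho X f * g + f * rho X g) /\
      (forall X Y f, rho (X + Y) f = rho X f + rho Y f) /\
      (forall X g f, rho (g *: X) f = g * rho X f) /\
      (forall X Y f, rho (br X Y) f = rho X (rho Y f) - rho Y (rho X f)) /\
      (forall X Y f, br X (f *: Y) = rho X f *: Y + f *: br X Y).

Definition LieD (br : V -> V -> V) (mul : V -> V -> V) (Z X Y : V) : V :=
  br Z (mul X Y) - mul (br Z X) Y - mul X (br Z Y).

Definition Fmult (br : V -> V -> V) (mul : V -> V -> V) (u : V) : Prop :=
  (forall X Y Z, mul (X + Y) Z = mul X Z + mul Y Z) /\
      (forall f X Y, mul (f *: X) Y = f *: mul X Y) /\
      (forall X Y, mul X Y = mul Y X) /\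
      (forall X Y Z, mul X (mul Y Z) = mul (mul X Y) Z) /\
      (forall X, mul u X = X) /\
      (forall X Y Z W, LieD br mul (mul X Y) Z W
                       = mul X (LieD br mul Y Z W) + mul Y (LieD br mul X Z W)).

Definition eventual_identity (br : V -> V -> V) (mul : V -> V -> V) (e E : V)
  : Prop :=
  exists Einv : V, mul E Einv = e /\
    Fmult br (fun X Y => mul (mul X Y) Einv) E.

Definition npow (mul : V -> V -> V) (e X : V) (n : nat) : V :=
  iter n (mul X) e.

Definition zpow (mul : V -> V -> V) (e E Einv : V) (z : int) : V :=
  match z with
  | Posz n => npow mul e E n
  | Negz n => npow mul e Einv n.+1
  end.

End Defs.

(* Main.v *)
Require Import Defs.
From HB Require Import structures.
From mathcomp Require Import all_boot all_order all_algebra.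
From mathcomp Require Import ring.
Import GRing.Theory.
Local Open Scope ring_scope.

Section Main.
Variables (A : comPzRingType) (V : lmodType A).
Variables (br : V -> V -> V) (mul : V -> V -> V) (e E Ei : V).
Hypothesis brN : forall X Y, br X Y = - br Y X.
Hypothesis mD : forall X Y Z, mul (X + Y) Z = mul X Z + mul Y Z.
Hypothesis mZ : forall f X Y, mul (f *: X) Y = f *: mul X Y.
Hypothesis mC : forall X Y, mul X Y = mul Y X.
Hypothesis mA : forall X Y Z, mul X (mul Y Z) = mul (mul X Y) Z.
Hypothesis m1 : forall X, mul e X = X.
Hypothesis mF : forall X Y Z W, LieD br mul (mul X Y) Z W
                       = mul X (LieD br mul Y Z W) + mul Y (LieD br mul X Z W).
Hypothesis HEi : mul E Ei = e.
Hypothesis sZ : forall X Y,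
  LieD br (fun X Y => mul (mul X Y) Ei) E X Y = 0.

Lemma m1r X : mul X e = X. Proof. by rewrite mC m1. Qed.
Lemma mNl X Y : mul (- X) Y = - mul X Y.
Proof. by rewrite -scaleN1r mZ scaleN1r. Qed.
Lemma mNr X Y : mul X (- Y) = - mul X Y.
Proof. by rewrite mC mNl mC. Qed.
Lemma mDr X Y Z : mul X (Y + Z) = mul X Y + mul X Z.
Proof. by rewrite mC mD !(mC X). Qed.
Lemma mBl X Y Z : mul (X - Y) Z = mul X Z - mul Y Z.
Proof. by rewrite mD mNl. Qed.
Lemma mBr X Y Z : mul X (Y - Z) = mul X Y - mul X Z.
Proof. by rewrite mDr mNr. Qed.
Lemma mzl X Y k : mul (X *~ k) Y = mul X Y *~ k.
Proof. by rewrite -!scaler_int mZ. Qed.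
Lemma mzr X Y k : mul X (Y *~ k) = mul X Y *~ k.
Proof. by rewrite mC mzl mC. Qed.
Lemma mCA X Y Z : mul X (mul Y Z) = mul Y (mul X Z).
Proof. by rewrite mA (mC X) -mA. Qed.
Lemma mAC X Y Z : mul (mul X Y) Z = mul (mul X Z) Y.
Proof. by rewrite -mA (mC Y) mA. Qed.

Lemma brL Z X Y : br Z (mul X Y) = LieD br mul Z X Y + mul (br Z X) Y + mul X (br Z Y).
Proof. by rewrite /LieD addrAC subrK subrK. Qed.

Lemma dbl (x : V) : x = x + x -> x = 0.
Proof. by move/(congr1 (fun z => z - x)); rewrite addrK subrr. Qed.

Lemma Le0 Z W : LieD br mul e Z W = 0.
Proof. by apply: dbl; have := mF e e Z W; rewrite !m1. Qed.

Lemma bree : br e e = 0.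
Proof.
have := Le0 e e; rewrite /LieD !m1 m1r => /eqP.
by rewrite subrr add0r oppr_eq0 => /eqP.
Qed.

Definition P (k : int) := zpow mul e E Ei k.

Lemma P0 : P 0 = e. Proof. by []. Qed.
Lemma P1 : P 1 = E. Proof. by rewrite /P /= /npow /= m1r. Qed.

Lemma PS k : P (k + 1) = mul (P k) E.
Proof.
case: k => [n|n].
  by rewrite /P -PoszD addn1 /= /npow /= mC.
case: n => [|n].
  by rewrite /P /= /npow /= m1r mC HEi.
have -> : Negz n.+1 + 1 = Negz n by rewrite !NegzE; ring.
rewrite /P /= /npow /=.
by rewrite [RHS]mAC (mC Ei E) HEi m1.
Qed.

Lemma PB k : P (k - 1) = mul (P k) Ei.
Proof. by rewrite -{2}(subrK 1 k) PS -mA HEi m1r. Qed.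

Lemma Padd j k : mul (P j) (P k) = P (j + k).
Proof.
elim/int_rec: k => [|n IH|n IH].
- by rewrite P0 m1r addr0.
- by rewrite -addn1 PoszD addrA !PS mA IH.
- have -> : - (Posz n.+1) = - Posz n - 1 by rewrite -addn1 PoszD opprD.
  by rewrite addrA !PB mA IH.
Qed.

Lemma deriv (g : int -> V) : g 0 = 0 ->
  (forall k, g (k + 1) = mul (g k) E + mul (P k) (g 1)) ->
  forall k, g k = mul (P (k - 1)) (g 1) *~ k.
Proof.
move=> g0 gS.
have key k : mul (mul (P (k - 1)) (g 1)) E = mul (P k) (g 1).
  by rewrite mAC -PS subrK.
elim/int_rec => [|n IH|n IH].
- by rewrite g0 mulr0z.
- rewrite -addn1 PoszD gS IH mzl key addrK mulrzDr mulr1z.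
  by [].
- have E1 : - (Posz n) = (- Posz n.+1) + 1.
    by rewrite -addn1 PoszD opprD subrK.
  move: IH; rewrite E1 gS => IH.
  have := congr1 (fun z => mul z Ei) IH.
  rewrite mD -mA HEi m1r addrK.
  move: (- Posz n.+1) => k.
  have kk : mul (mul (P k) (g 1)) Ei = mul (P (k - 1)) (g 1) by rewrite mAC -PB.
  rewrite mzl kk.
  move/(congr1 (fun z => z - mul (P (k - 1)) (g 1))); rewrite addrK => ->.
  by rewrite mulrzDr mulr1z addrK.
Qed.

Lemma re (w l p q : V) : -w + (l+p+q) + (w+w) - p - q = l + w.
Proof.
have -> : -w + (l+p+q) + (w+w) = l + p + q + w.
  by rewrite (addrC (-w)) addrA subrK.
rewrite -(addrA (l+p) q w) (addrC q w) addrA.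
rewrite (addrAC _ q (-p)) addrK (addrAC l p w) addrK //.
Qed.

Lemma mWE W : mul (mul W E) Ei = W. Proof. by rewrite -mA HEi m1r. Qed.
Lemma mWEi W : mul (mul W Ei) E = W. Proof. by rewrite mAC mWE. Qed.
Lemma mEW W : mul (mul E W) Ei = W. Proof. by rewrite mAC HEi m1. Qed.

Lemma brEE : br E E = 0.
Proof.
have := sZ E E; rewrite /LieD mWE mWE mEW => /eqP.
by rewrite subrr add0r oppr_eq0 => /eqP.
Qed.

Lemma cE : br E Ei = mul (br E e) Ei + mul (br E e) Ei.
Proof.
have := sZ e e; rewrite /LieD !m1 m1r => /eqP.
by rewrite subr_eq0 subr_eq addrC => /eqP.
Qed.

Definition LE := LieD br mul E.

Lemma L1 X : LE X Ei = - mul (mul X (br E e)) Ei.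
Proof.
have := sZ X e; rewrite /LieD !m1r brL cE mDr !mA -/(LE X Ei).
set u := mul (br E X) Ei; set w := mul (mul X (br E e)) Ei.
by rewrite (addrAC (LE X Ei)) addrK addrA addrK => /eqP; rewrite addr_eq0 => /eqP.
Qed.

Lemma LEf X Y : LE X Y = mul (mul X Y) (br e E).
Proof.
have := sZ X Y; rewrite /LieD brL -/(LE (mul X Y) Ei) L1 brL cE.
rewrite /LE; move: (LieD br mul E X Y) => l.
rewrite !mD mDr !mA re => /eqP; rewrite addr_eq0 => /eqP H.
have := congr1 (fun z => mul z E) H; rewrite /= mNl !mWEi => ->.
by rewrite (brN E e) mNr opprK.
Qed.

Lemma m0r X : mul X 0 = 0.
Proof. by have := mZ 0 0 X; rewrite !scale0r mC. Qed.

Lemma LPk X Y k : LieD br mul (P k) X Y = mul (P (k - 1)) (LE X Y) *~ k.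
Proof.
have := @deriv (fun k => LieD br mul (P k) X Y) (Le0 X Y).
rewrite P1 => -> // j.
by rewrite PS mF addrC mC.
Qed.

Lemma brePk k : br e (P k) = mul (P (k - 1)) (br e E) *~ k.
Proof.
have := @deriv (fun k => br e (P k)) bree.
rewrite P1 => -> // j.
by rewrite PS brL Le0 add0r.
Qed.

Lemma brEPk k : br E (P k) = mul (P k) (br e E) *~ (k - 1).
Proof.
have g0 : br E (P 0) + mul (P 0) (br e E) = 0.
  by rewrite P0 m1 (brN E e) addNr.
have := @deriv (fun k => br E (P k) + mul (P k) (br e E)) g0.
rewrite P1 brEE add0r => H.
have H2 : forall j, br E (P (j + 1)) + mul (P (j + 1)) (br e E) =
     mul (br E (P j) + mul (P j) (br e E)) E + mul (P j) (mul E (br e E)).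
  move=> j; rewrite PS brL -/(LE _ _) LEf brEE m0r addr0 mD.
  by rewrite (mAC (P j) (br e E) E) (mA (P j) E) (addrC (mul (mul (P j) E) (br e E))).
have {H H2} := H H2 k.
rewrite (mA (P (k - 1))) -PS subrK => /(congr1 (fun z => z - mul (P k) (br e E))).
by rewrite addrK => ->; rewrite mulrzBr mulr1z.
Qed.

Lemma PX i j X : mul (P i) (mul (P j) X) = mul (P (i + j)) X.
Proof. by rewrite mA Padd. Qed.
Lemma PXE i X : mul (mul (P i) X) E = mul (P (i + 1)) X.
Proof. by rewrite mAC PS. Qed.

Lemma re2 (x y z : V) : x + y + z + x = y + x + (z + x).
Proof. by rewrite (addrC x y) addrA. Qed.

Lemma brPP n m : br (P n) (P m) = mul (P (m + n - 1)) (br e E) *~ (m - n).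
Proof.
set a := br e E.
have g0 : br (P n) (P 0) + mul (P (n + 0 - 1)) a *~ n = 0.
  by rewrite P0 brN brePk addr0 addNr.
have := @deriv (fun k => br (P n) (P k) + mul (P (n + k - 1)) a *~ n) g0.
have H2 : forall j, br (P n) (P (j + 1)) + mul (P (n + (j + 1) - 1)) a *~ n =
   mul (br (P n) (P j) + mul (P (n + j - 1)) a *~ n) E +
   mul (P j) (br (P n) (P 1) + mul (P (n + 1 - 1)) a *~ n).
  move=> j.
  rewrite PS brL LPk -/(LE _ _) LEf -PS PX mD mzl PXE P1 mDr mzr PX.
  rewrite (_ : n - 1 + (j + 1) = n + j); last by ring.
  rewrite (_ : n + (j + 1) - 1 = n + j); last by ring.
  rewrite (_ : n + j - 1 + 1 = n + j); last by ring.
  rewrite (_ : j + (n + 1 - 1) = n + j); last by ring.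
  by rewrite re2.
move=> /(_ H2 m).
rewrite P1 (brN (P n) E) brEPk addrK -/a.
have -> : - (mul (P n) a *~ (n - 1)) + mul (P n) a *~ n = mul (P n) a.
  by rewrite mulrzBr mulr1z opprB subrK.
rewrite PX.
rewrite (_ : n + m - 1 = m + n - 1); last by ring.
rewrite (_ : m - 1 + n = m + n - 1); last by ring.
move/(congr1 (fun z => z - mul (P (m + n - 1)) a *~ n)); rewrite addrK => ->.
by rewrite mulrzBr.
Qed.

End Main.

Theorem mainTheorem6 (A : comPzRingType) (V : lmodType A)
  (br : V -> V -> V) (rho : V -> A -> A) (mul : V -> V -> V) (e E Einv : V) :
  LieRinehart br rho ->
  Fmult br mul e ->
  eventual_identity br mul e E ->
  mul E Einv = e ->
  forall m n : int,
    br (zpow mul e E Einv n) (zpow mul e E Einv m)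
    = mul (zpow mul e E Einv (m + n - 1)) (br e E) *~ (m - n).
Proof.
case=> _ [brN _].
case=> mD [mZ [mC [mA [m1 mF]]]].
case=> Ei [HEi [_ [_ [_ [_ [s1 sF]]]]]] HEinv.
have EE : Ei = Einv.
  by rewrite -{1}(m1 Ei) -HEinv -mA (mC Einv) mA HEi m1.
subst Ei.
have sZ : forall X Y,
  LieD br (fun X Y => mul (mul X Y) Einv) E X Y = 0.
  move=> X Y; apply: dbl.
  by have := sF E E X Y; rewrite !s1.
move=> m n.
exact (brPP _ _ _ _ _ _ _ brN mD mZ mC mA m1 mF HEi sZ n m).
Qed.
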